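(* Let $\mathbf a\in\mathbb{R}^{\mathbb{N}}$ satisfy: (1) $\mathbf a\ge 0$, $\Delta\mathbf a\le 0$ and $(\Delta\mathbf a)_1<0$; and (2) $\Delta^2\mathbf a\ge 0$ and $(\Delta^2\mathbf a)_1>0$. Then the linear centrality $f^{\mathbf a}$ is rank monotone.
   Context: Graphs are finite directed graphs; $d_G(x,y)$ is the shortest directed path length from $x$ to $y$ ($\infty$ if none). The linear centrality is $f^{\mathbf a}_G(i)=\sum_{z\in V_G,\ d_G(z,i)<\infty}a_{d_G(z,i)}$. For a sequence $\mathbf a$, $\Delta\mathbf a$ is the sequence with $(\Delta\mathbf a)_0=0$ and $(\Delta\mathbf a)_i=a_{i+1}-a_i$ for $i>0$; $\Delta^2\mathbf a=\Delta(\Delta\mathbf a)$; $\mathbf a\ge0$ ($\le0$) means every entry is $\ge0$ ($\le 0$). For a graph $G$ and distinct nodes $x,y$ with $(x,y)\notin E_G$, let $G'$ be $G$ with the arc $x\to y$ added. A centrality $f$ is rank monotone if for all such $G,x,y$ and every node $w\ne y$: if $f_G(w)\le f_G(y)$ then $f_{G'}(w)<f_{G'}(y)$. *)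

(* Defs.v *)
From HB Require Import structures.
From mathcomp Require Import all_boot all_order all_algebra.
Set Implicit Arguments. Unset Strict Implicit. Unset Printing Implicit Defensive.
Import Order.TTheory GRing.Theory Num.Theory.

Fixpoint walkn (T : finType) (E : rel T) (n : nat) (z i : T) : bool :=
  match n with
  | 0 => z == i
  | n'.+1 => [exists w, E z w && walkn E n' w i]
  end.

(* d_G(z,i) < oo  iff  i is reachable from z (reflexive-transitive closure). *)
Definition reachable (T : finType) (E : rel T) (z i : T) : bool := connect E z i.

(* d_G(z,i): the least n with a walk of length n from z to i.  A shortest walk
   is a simple path, hence has length < #|T|, so searching 0..#|T|-1 suffices;
   the value is only used when z reaches i. *)
Definition dist (T : finType) (E : rel T) (z i : T) : nat :=
  find (fun n => walkn E n z i) (iota 0 #|T|).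

Definition lin_centrality (R : numDomainType) (a : nat -> R)
  (T : finType) (E : rel T) (i : T) : R :=
  (\sum_(z | reachable E z i) a (dist E z i))%R.

Definition Delta (R : zmodType) (a : nat -> R) (i : nat) : R :=
  if i is 0 then 0%R else (a i.+1 - a i)%R.

Definition add_arc (T : finType) (E : rel T) (x y : T) : rel T :=
  fun u v => E u v || ((u == x) && (v == y)).

Definition rank_monotone (R : numDomainType)
  (f : forall T : finType, rel T -> T -> R) : Prop :=
  forall (T : finType) (E : rel T) (x y : T),
    x != y -> ~~ E x y ->
    forall w : T, w != y ->
      (f T E w <= f T E y)%R -> (f T (add_arc E x y) w < f T (add_arc E x y) y)%R.

(* Main.v *)
Require Import Defs.
From HB Require Import structures.
From mathcomp Require Import all_boot all_order all_algebra.
From mathcomp Require Import zify ring lra.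
Import Order.TTheory GRing.Theory Num.Theory.
Set Implicit Arguments. Unset Strict Implicit.

Lemma walk_reach (T:finType) (E:rel T) n z v : walkn E n z v -> connect E z v.
Proof.
elim: n z => [|n IH] z /=; first by move/eqP->; exact: connect0.
case/existsP=> u /andP[Ezu /IH]; apply: connect_trans; exact: connect1.
Qed.

Lemma walk_cat (T:finType) (E:rel T) m k z u v :
  walkn E m z u -> walkn E k u v -> walkn E (m+k) z v.
Proof.
elim: m z => [|m IH] z /=; first by move/eqP->.
case/existsP=> w /andP[Ezw Hw] Hk; apply/existsP; exists w; rewrite Ezw /=; exact: IH.
Qed.

Lemma path_walk (T:finType) (E:rel T) p z : path E z p -> walkn E (size p) z (last z p).
Proof.
elim: p z => [|u p IH] z /=; first by [].
case/andP=> Ezu Hp; apply/existsP; exists u; rewrite Ezu; exact: IH.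
Qed.

Lemma reach_walk (T:finType) (E:rel T) z v :
  connect E z v -> exists2 n, n < #|T| & walkn E n z v.
Proof.
case/connectP=> p Hp ->.
case/shortenP: Hp => p' Hp' Hu _.
exists (size p'); last exact: path_walk.
have H1 := card_uniqP Hu. have H2 := max_card (mem (z :: p')).
rewrite H1 /= in H2. exact: H2.
Qed.

Lemma dist_spec (T:finType) (E:rel T) z v :
  connect E z v -> dist E z v < #|T| /\ walkn E (dist E z v) z v.
Proof.
move=> /reach_walk [n Hn Hw].
have Hh : has (fun m => walkn E m z v) (iota 0 #|T|).
  by apply/hasP; exists n => //; rewrite mem_iota.
have Hlt : dist E z v < #|T| by rewrite /dist -{2}(size_iota 0 #|T|) -has_find.
split=> //. have := nth_find 0 Hh. rewrite nth_iota //.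
Qed.

Lemma dist_min (T:finType) (E:rel T) n z v : walkn E n z v -> dist E z v <= n.
Proof.
move=> Hw; have [Hlt _] := dist_spec (walk_reach Hw).
case: (ltnP n #|T|) => Hn; last by apply: ltnW; exact: leq_trans Hlt Hn.
rewrite leqNgt; apply/negP=> Hd.
have := before_find 0 Hd. rewrite nth_iota // add0n /= Hw //.
Qed.

Lemma dist_refl (T:finType) (E:rel T) z : dist E z z = 0.
Proof. apply/eqP; rewrite -leqn0; apply: dist_min; exact: eqxx. Qed.

Lemma dist_pos (T:finType) (E:rel T) z v : z != v -> connect E z v -> 0 < dist E z v.
Proof.
move=> Hzv /dist_spec [_]; case: (dist E z v) => //= /eqP Hz; by rewrite Hz eqxx in Hzv.
Qed.

Lemma walk_sub (T:finType) (E1 E2 : rel T) : (forall u v, E1 u v -> E2 u v) ->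
  forall n z v, walkn E1 n z v -> walkn E2 n z v.
Proof.
move=> H; elim=> [|n IH] z v //=.
case/existsP=> u /andP[Ezu Hu]; apply/existsP; exists u; rewrite H //=; exact: IH.
Qed.

Lemma sub_arc (T:finType) (E : rel T) x y u v : E u v -> add_arc E x y u v.
Proof. by rewrite /add_arc => ->. Qed.

Lemma walk_split (T:finType) (E:rel T) x y n z v :
  walkn (add_arc E x y) n z v -> walkn E n z v \/
  exists n1 n2, [/\ n1 + 1 + n2 <= n, walkn E n1 z x & walkn E n2 y v].
Proof.
elim: n z => [|n IH] z /=; first by left.
case/existsP=> u /andP[]; rewrite /add_arc; case/orP=> [Ezu|/andP[/eqP-> /eqP->]] /IH.
- case=> [Hw|[n1 [n2 [Hle H1 H2]]]].
  + by left; apply/existsP; exists u; rewrite Ezu.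
  + right; exists n1.+1, n2; split; first lia; try done.
    by apply/existsP; exists u; rewrite Ezu.
- case=> [Hw|[n1 [n2 [Hle H1 H2]]]].
  + by right; exists 0, n; split => //=; lia.
  + by right; exists 0, n2; split=> //=; lia.
Qed.

Lemma walk_join (T:finType) (E:rel T) x y n1 n2 z v :
  walkn E n1 z x -> walkn E n2 y v -> walkn (add_arc E x y) (n1 + 1 + n2) z v.
Proof.
move=> H1 H2.
have Hxy : walkn (add_arc E x y) 1 x y.
  by apply/existsP; exists y; rewrite /add_arc !eqxx orbT.
apply: walk_cat; last exact: (walk_sub (@sub_arc T E x y) H2).
apply: walk_cat Hxy; exact: (walk_sub (@sub_arc T E x y) H1).
Qed.

Lemma dist_cases (T:finType) (E:rel T) x y z v :
  connect (add_arc E x y) z v ->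
  (connect E z v /\ dist (add_arc E x y) z v = dist E z v) \/
  [/\ connect E z x, connect E y v,
      dist (add_arc E x y) z v = dist E z x + 1 + dist E y v &
      (connect E z v -> dist (add_arc E x y) z v <= dist E z v)].
Proof.
move=> /dist_spec [_ Hw].
case: (walk_split Hw) => [H|[n1 [n2 [Hle H1 H2]]]].
- left; have R := walk_reach H; split=> //; apply/eqP; rewrite eqn_leq (dist_min H) andbT.
  exact: dist_min (walk_sub (@sub_arc T E x y) (dist_spec R).2).
- right. have Rx := walk_reach H1; have Ry := walk_reach H2.
  have Hx := dist_min H1; have Hy := dist_min H2.
  have J := dist_min (walk_join (dist_spec Rx).2 (dist_spec Ry).2).
  split=>//; first lia.
  move=> R; exact: dist_min (walk_sub (@sub_arc T E x y) (dist_spec R).2).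
Qed.
Local Open Scope ring_scope.

Section Num.
End Num.

Lemma mono_le (R : realFieldType) (a : nat -> R)
  (Hm : forall i, (0 < i)%N -> a i.+1 <= a i) i j :
  (0 < i)%N -> (i <= j)%N -> a j <= a i.
Proof.
move=> Hi /subnK <-; elim: (j - i)%N => [|m IH]; rewrite ?add0n // addSn.
apply: le_trans (Hm _ _) IH; lia.
Qed.

Lemma Dk (R : realFieldType) (a : nat -> R)
  (Hc : forall i, (0 < i)%N -> a i.+1 - a i <= a i.+2 - a i.+1) j k :
  (0 < j)%N -> a j.+1 - a j <= a (j+k)%N.+1 - a (j+k)%N.
Proof.
move=> Hj; elim: k => [|k IH]; first by rewrite addn0.
apply: le_trans IH _; rewrite addnS; apply: Hc; lia.
Qed.

Lemma conv_le (R : realFieldType) (a : nat -> R)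
  (Hc : forall i, (0 < i)%N -> a i.+1 - a i <= a i.+2 - a i.+1) p q k :
  (0 < p)%N -> (p <= q)%N -> a (p+k)%N - a (q+k)%N <= a p - a q.
Proof.
move=> Hp /subnK <-; elim: (q - p)%N => [|m IH]; first by rewrite add0n; lra.
have := Dk Hc k (_ : (0 < m + p)%N). rewrite !addSn. move=> H; have := H ltac:(lia). lra.
Qed.

Lemma conv_lt (R : realFieldType) (a : nat -> R)
  (Hc : forall i, (0 < i)%N -> a i.+1 - a i <= a i.+2 - a i.+1)
  (Hs : a 2 - a 1 < a 3 - a 2) q k :
  (0 < k)%N -> (1 < q)%N -> a (1+k)%N - a (q+k)%N < a 1 - a q.
Proof.
move=> Hk Hq.
have H := Dk Hc (k-1) (_ : (0 < 2)%N).
have e1 : (2 + (k-1)).+1 = (2+k)%N by lia.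
have e2 : (2 + (k-1))%N = (1+k)%N by lia.
rewrite e1 e2 in H; have := H isT => {}H.
have H2 := conv_le Hc k (_ : (0 < 2)%N) Hq.
have := H2 isT. lra.
Qed.

Definition Av (R : numDomainType) (a : nat -> R) (T : finType) (E : rel T) (z v : T) : R :=
  if reachable E z v then a (dist E z v) else 0.

Lemma Av_eq (R : numDomainType) (a : nat -> R) (T : finType) (E : rel T) z v :
  connect E z v -> Av a E z v = a (dist E z v).
Proof. by rewrite /Av /reachable => ->. Qed.

Lemma Av_0 (R : numDomainType) (a : nat -> R) (T : finType) (E : rel T) z v :
  ~~ connect E z v -> Av a E z v = 0.
Proof. by rewrite /Av /reachable => /negbTE ->. Qed.

Lemma Av_ge0 (R : numDomainType) (a : nat -> R) (Ha : forall i, 0 <= a i) (T : finType) (E : rel T) z v :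
  0 <= Av a E z v.
Proof. by rewrite /Av; case: ifP. Qed.

Lemma lin_Av (R : numDomainType) (a : nat -> R) (T : finType) (E : rel T) v :
  lin_centrality a E v = \sum_z Av a E z v.
Proof. by rewrite /lin_centrality big_mkcond. Qed.

Lemma gain_nonneg (R : realFieldType) (a : nat -> R) (Ha : forall i, 0 <= a i)
  (Hm : forall i, (0 < i)%N -> a i.+1 <= a i) (T : finType) (E : rel T) x y z v :
  Av a E z v <= Av a (add_arc E x y) z v.
Proof.
case: (boolP (connect E z v)) => Rv; last by rewrite Av_0 //; exact: Av_ge0.
have Hw := (dist_spec Rv).2.
have Hw' := walk_sub (@sub_arc T E x y) Hw.
have Rv' := walk_reach Hw'.
rewrite !Av_eq //.
have Hle := dist_min Hw'.
case: (eqVneq z v) => [->|Hzv]; first by rewrite !dist_refl.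
apply: mono_le => //; exact: dist_pos.
Qed.

Lemma gain_le (R : realFieldType) (a : nat -> R) (Ha : forall i, 0 <= a i)
  (Hm : forall i, (0 < i)%N -> a i.+1 <= a i)
  (Hc : forall i, (0 < i)%N -> a i.+1 - a i <= a i.+2 - a i.+1)
  (T : finType) (E : rel T) x y w z :
  Av a (add_arc E x y) z w - Av a E z w <= Av a (add_arc E x y) z y - Av a E z y.
Proof.
have Gy := gain_nonneg Ha Hm E x y z y.
case: (lerP (Av a (add_arc E x y) z w - Av a E z w) 0) => Hg; first lra.
move: Hg.
case: (boolP (connect (add_arc E x y) z w)) => RW'; last first.
  by rewrite Av_0 //; have := Av_ge0 Ha E z w; lra.
case: (dist_cases RW') => [[Rw Hd]|[Px Kw Hdw HRw]].
  by rewrite (Av_eq _ RW') (Av_eq _ Rw) Hd; lra.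
have Wy : walkn (add_arc E x y) (dist E z x + 1 + 0) z y.
  by apply: walk_join; [exact: (dist_spec Px).2 | exact: eqxx].
have Py' := walk_reach Wy.
have Hdy := dist_min Wy.
case: (dist_cases Py') => [[Q Hq]|[_ _ Hdy' HQ]].
  have Wr := walk_cat (dist_spec Q).2 (dist_spec Kw).2.
  have Rw := walk_reach Wr. have Hr := dist_min Wr.
  have := HRw Rw => Hrr.
  have Heq : dist (add_arc E x y) z w = dist E z w by lia.
  by rewrite (Av_eq _ RW') (Av_eq _ Rw) Heq; lra.
rewrite dist_refl addn0 in Hdy'.
rewrite (Av_eq _ Py') Hdy' (Av_eq _ RW') Hdw => Hg.
case: (boolP (connect E z y)) => Q.
  have Wr := walk_cat (dist_spec Q).2 (dist_spec Kw).2.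
  have Rw := walk_reach Wr. have Hr := dist_min Wr.
  have := HRw Rw => Hrr. rewrite Hdw in Hrr.
  have := HQ Q => Hpq. rewrite Hdy' in Hpq.
  rewrite !Av_eq //.
  have H1 := mono_le Hm (_ : (0 < dist E z w)%N) Hr.
  have H2 := conv_le Hc (dist E y w) (_ : (0 < dist E z x + 1)%N) Hpq.
  have := H1 ltac:(lia). have := H2 ltac:(lia). lra.
rewrite (Av_0 _ Q).
have H1 := mono_le Hm (_ : (0 < dist E z x + 1)%N) (leq_addr (dist E y w) (dist E z x + 1)).
have := H1 ltac:(lia). have := Av_ge0 Ha E z w. lra.
Qed.

Lemma dist_gt1 (T : finType) (E : rel T) x y : x != y -> ~~ E x y -> connect E x y -> (1 < dist E x y)%N.
Proof.
move=> Hxy HE Q; have Hp := dist_pos Hxy Q.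
have [_ W] := dist_spec Q.
case: (dist E x y) Hp W => [|[|n]] //= _.
case/existsP=> u /andP[Exu /eqP Hu]; by rewrite -Hu Exu in HE.
Qed.

Lemma gain_lt (R : realFieldType) (a : nat -> R) (Ha : forall i, 0 <= a i)
  (Hm : forall i, (0 < i)%N -> a i.+1 <= a i)
  (Hc : forall i, (0 < i)%N -> a i.+1 - a i <= a i.+2 - a i.+1)
  (Hs : a 2 - a 1 < a 3 - a 2) (H12 : a 2 < a 1)
  (T : finType) (E : rel T) x y w :
  x != y -> ~~ E x y -> w != y ->
  Av a (add_arc E x y) x w - Av a E x w < Av a (add_arc E x y) x y - Av a E x y.
Proof.
move=> Hxy HE Hwy.
have Wy : walkn (add_arc E x y) (0 + 1 + 0) x y by apply: walk_join; exact: eqxx.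
have Py' := walk_reach Wy.
have Hdy := dist_min Wy.
have [[Q Hq]|[_ _ Hdy' HQ]] := dist_cases Py'.
  have := dist_gt1 Hxy HE Q; lia.
rewrite !dist_refl addn0 add0n in Hdy'.
have Gy : 0 < Av a (add_arc E x y) x y - Av a E x y.
  rewrite (Av_eq _ Py') Hdy' /=.
  case: (boolP (connect E x y)) => Q.
    rewrite Av_eq //; have := mono_le Hm (isT : (0 < 2)%N) (dist_gt1 Hxy HE Q); lra.
  rewrite Av_0 //; have := Ha 2; lra.
case: (lerP (Av a (add_arc E x y) x w - Av a E x w) 0) => Hg; first lra.
move: Hg.
case: (boolP (connect (add_arc E x y) x w)) => RW'; last first.
  by rewrite Av_0 //; have := Av_ge0 Ha E x w; lra.
case: (dist_cases RW') => [[Rw Hd]|[Px Kw Hdw HRw]].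
  by rewrite (Av_eq _ RW') (Av_eq _ Rw) Hd; lra.
rewrite dist_refl add0n in Hdw.
have Hk : (0 < dist E y w)%N by apply: dist_pos => //; rewrite eq_sym.
rewrite (Av_eq _ Py') Hdy' (Av_eq _ RW') Hdw => Hg.
case: (boolP (connect E x y)) => Q.
  have Wr := walk_cat (dist_spec Q).2 (dist_spec Kw).2.
  have Rw := walk_reach Wr. have Hr := dist_min Wr.
  have := HRw Rw => Hrr. rewrite Hdw in Hrr.
  rewrite !Av_eq //.
  have H1 := mono_le Hm (_ : (0 < dist E x w)%N) Hr.
  have H2 := conv_lt Hc Hs Hk (dist_gt1 Hxy HE Q).
  have := H1 (leq_trans (ltn0Sn _) Hrr). lra.
rewrite (Av_0 _ Q).
have H1 := mono_le Hm (isT : (0 < 2)%N) (_ : (2 <= 1 + dist E y w)%N).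
have := H1 Hk. have := Av_ge0 Ha E x w. lra.
Qed.

Theorem proposition4 (R : realFieldType) (a : nat -> R) :
  (forall i, 0 <= a i) ->
  (forall i, Delta a i <= 0) ->
  Delta a 1 < 0 ->
  (forall i, 0 <= Delta (Delta a) i) ->
  0 < Delta (Delta a) 1 ->
  rank_monotone (fun T E i => lin_centrality a (T:=T) E i).
Proof.
move=> Ha Hd Hd1 Hdd Hdd1 T E x y Hxy HExy w Hwy.
have Hm : forall i, (0 < i)%N -> a i.+1 <= a i.
  by case=> // i _; have := Hd i.+1; rewrite /=; lra.
have Hc : forall i, (0 < i)%N -> a i.+1 - a i <= a i.+2 - a i.+1.
  by case=> // i _; have := Hdd i.+1; rewrite /=; lra.
have Hs : a 2 - a 1 < a 3 - a 2 by move: Hdd1; rewrite /=; lra.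
have H12 : a 2 < a 1 by move: Hd1; rewrite /=; lra.
rewrite /= !lin_Av => Hle.
have : \sum_z (Av a (add_arc E x y) z w - Av a E z w) <
       \sum_z (Av a (add_arc E x y) z y - Av a E z y).
  rewrite (bigD1 x) // [X in _ < X](bigD1 x) //=; apply: ltr_leD.
    exact: gain_lt.
  apply: ler_sum => z _; exact: gain_le.
rewrite !sumrB; lra.
Qed.
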